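(* Fix $\varepsilon\in(0,1/6)$ and $k=3$. Let $g:(0,\infty)\to(0,\infty)$ be any gradient function (any function of distance). There is no function $F:(0,\infty)^4\to\{1,2,3\}$ with the following property: for all $a,b>0$, the coloring of the rectangle $[0,a]\times[0,b]$ that assigns to the point $(x,y)$ the color $F\big(g(d_1),g(d_2),g(d_3),g(d_4)\big)$, where $d_1,\dots,d_4$ are the Euclidean distances from $(x,y)$ to the four corners $(0,0),(a,0),(0,b),(a,b)$, is an $\varepsilon$-approximate French flag. In other words, no algorithm in the concentration model with four point sources at the corners can produce an $\varepsilon$-approximate French flag for all flag dimensions.
   Context: Concentration model in 2D: four sources sit at the corners of the $a\times b$ flag (width $a$ along the $x$-axis, height $b$); each agent's only input is the measured concentration from each source, which is a function of its distance to that source; all agents run the same algorithm and have no other positional information (no coordinates, no knowledge of $a$ or $b$). A $k$-colored coloring of a flag of width $a$ is an $\varepsilon$-approximate flag if for every color $z\in\{1,\dots,k\}$ and every agent at $(x,y)$: (1) if $x\in[(\frac{z-1}{k}+\varepsilon)a,(\frac{z}{k}-\varepsilon)a]$ then the agent has color $z$; (2) if the agent has color $z$ then $x\in[(\frac{z-1}{k}-\varepsilon)a,(\frac{z}{k}+\varepsilon)a]$. For $k=3$ the colors are blue $=1$, white $=2$, red $=3$. *)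

(* Defs.v *)
From Stdlib Require Import Reals Lra.
Open Scope R_scope.

Definition edist (x y px py : R) : R := sqrt ((x - px)^2 + (y - py)^2).

(* Agents of the a x b flag: points of [0,a]x[0,b] at positive distance from
   all four corners (the gradient function is only defined on (0,oo)). *)
Definition agent (a b x y : R) : Prop :=
  0 <= x <= a /\ 0 <= y <= b /\
  0 < edist x y 0 0 /\ 0 < edist x y a 0 /\
  0 < edist x y 0 b /\ 0 < edist x y a b.

Definition approx_flag (eps : R) (k : nat) (a b : R) (col : R -> R -> nat) : Prop :=
  forall (z : nat), (1 <= z <= k)%nat ->
  forall x y, agent a b x y ->
    ((((INR z - 1) / INR k + eps) * a <= x <= (INR z / INR k - eps) * a) ->
        col x y = z) /\
    (col x y = z ->
        ((INR z - 1) / INR k - eps) * a <= x <= (INR z / INR k + eps) * a).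

Definition conc_coloring (g : R -> R) (F : R -> R -> R -> R -> nat) (a b : R)
  : R -> R -> nat :=
  fun x y => F (g (edist x y 0 0)) (g (edist x y a 0))
               (g (edist x y 0 b)) (g (edist x y a b)).

(* Main.v *)
Require Import Defs.
From Stdlib Require Import Reals Lra Psatz.
Open Scope R_scope.

Lemma edist_pos x y px py : 0 < (x - px)^2 + (y - py)^2 -> 0 < edist x y px py.
Proof. intro H; unfold edist; apply sqrt_lt_R0; exact H. Qed.

Theorem theorem2 :
  forall (eps : R), 0 < eps < 1/6 ->
  forall (g : R -> R), (forall d, 0 < d -> 0 < g d) ->
  ~ (exists F : R -> R -> R -> R -> nat,
       (forall u1 u2 u3 u4, 0 < u1 -> 0 < u2 -> 0 < u3 -> 0 < u4 ->
          (1 <= F u1 u2 u3 u4 <= 3)%nat) /\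
       (forall a b, 0 < a -> 0 < b ->
          approx_flag eps 3 a b (conc_coloring g F a b))).
Proof.
  intros eps Heps g Hg [F [HF Hflag]].
  set (p := 1/6 - eps).
  assert (Hp : 0 < p < 1/6) by (unfold p; lra).
  set (A := 2/p).
  assert (HA : p * A = 2) by (unfold A; field; lra).
  assert (HA12 : A > 12) by nra.
  set (xp := A/2 - 1/(3*A)).
  assert (Hxp : 3 * A * xp = 3/2 * A^2 - 1) by (unfold xp; field; lra).
  assert (Hxp0 : 0 < xp < A) by nra.
  set (K := xp^2 + 35/36).
  assert (HK : 0 < K) by (unfold K; nra).
  set (Y := sqrt K).
  assert (HY : Y * Y = K) by (apply sqrt_sqrt; lra).
  assert (HY0 : 0 < Y) by (apply sqrt_lt_R0; lra).
  assert (I3 : INR 3 = 3) by (simpl; lra).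
  assert (I1 : INR 1 = 1) by (simpl; lra).
  destruct (Hflag 1 (2*Y) ltac:(lra) ltac:(lra) 1%nat ltac:(lia) (1/6) Y) as [C1 _].
  { repeat split; try lra; apply edist_pos; nra. }
  destruct (Hflag A 2 ltac:(lra) ltac:(lra) 1%nat ltac:(lia) xp 1) as [_ C2].
  { repeat split; try lra; apply edist_pos; nra. }
  rewrite I1, I3 in C1, C2.
  assert (E : conc_coloring g F 1 (2*Y) (1/6) Y = conc_coloring g F A 2 xp 1).
  { unfold conc_coloring, edist.
    assert (E1 : (1/6 - 0)^2 + (Y - 0)^2 = (xp - 0)^2 + (1 - 0)^2) by (unfold K in HY; nra).
    assert (E2 : (1/6 - 1)^2 + (Y - 0)^2 = (xp - A)^2 + (1 - 0)^2) by (unfold K in HY; nra).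
    assert (E3 : (1/6 - 0)^2 + (Y - 2*Y)^2 = (xp - 0)^2 + (1 - 2)^2) by (unfold K in HY; nra).
    assert (E4 : (1/6 - 1)^2 + (Y - 2*Y)^2 = (xp - A)^2 + (1 - 2)^2) by (unfold K in HY; nra).
    rewrite E1, E2, E3, E4; reflexivity. }
  assert (Hc1 : conc_coloring g F 1 (2*Y) (1/6) Y = 1%nat) by (apply C1; unfold p in *; lra).
  rewrite E in Hc1.
  specialize (C2 Hc1).
  unfold p in *; nra.
Qed.
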